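(* Let $\rho\colon\mathcal{F}\to[\Lambda]^\omega$ with $\mathcal{F}\subseteq[\Omega]^\omega$ be a partition regular function. Consider the conditions: (1) $\mathrm{FinBW}(\rho)$ coincides with the class of all finite (Hausdorff) spaces; (2) $\omega+1\notin\mathrm{FinBW}(\rho)$, where the ordinal $\omega+1$ carries the order topology; (3) $\rho\notin P^-(\Lambda)$; (4) $\rho_{\mathrm{FIN}^2}\leq_K\rho$. Then (1), (2), (3) are equivalent and (4) implies them. If moreover $\rho\in(S_1)$, then all four conditions are equivalent.
   Context: All topological spaces are Hausdorff. An ideal on a nonempty set $X$ is a family $\mathcal{I}\subseteq\mathcal{P}(X)$ with $\emptyset\in\mathcal{I}$, $X\notin\mathcal{I}$, closed under finite unions and subsets, containing all finite subsets of $X$; $\mathcal{I}^+=\mathcal{P}(X)\setminus\mathcal{I}$. Partition regular function: $\Lambda,\Omega$ countably infinite, $\mathcal{F}$ a nonempty family of infinite subsets of $\Omega$ with $F\setminus K\in\mathcal{F}$ for $F\in\mathcal{F}$, $K$ finite; $\rho\colon\mathcal{F}\to[\Lambda]^\omega$ is partition regular if (M) $E\subseteq F\Rightarrow\rho(E)\subseteq\rho(F)$; (R) if $F\in\mathcal{F}$ and $\rho(F)=A\cup B$ then some $E\in\mathcal{F}$ has $\rho(E)\subseteq A$ or $\rho(E)\subseteq B$; (S) for every $E\in\mathcal{F}$ there is $F\in\mathcal{F}$, $F\subseteq E$, such that every $a\in\rho(F)$ satisfies $a\notin\rho(F\setminus K)$ for some finite $K\subseteq\Omega$. $\mathcal{I}_\rho=\{A\subseteq\Lambda:\forall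 F\in\mathcal{F}\ \rho(F)\not\subseteq A\}$. For an ideal $\mathcal{I}$ on $\Lambda$, $\rho_{\mathcal{I}}\colon\mathcal{I}^+\to[\Lambda]^\omega$, $\rho_{\mathcal{I}}(A)=A$ (with $\Omega=\Lambda$). $\rho$-convergence: for $f\colon\Lambda\to X$ and $F\in\mathcal{F}$, $f\restriction\rho(F)$ $\rho$-converges to $x\in X$ if for every neighborhood $U$ of $x$ there is a finite $K\subseteq\Omega$ with $f[\rho(F\setminus K)]\subseteq U$. $\mathrm{FinBW}(\rho)$ is the class of spaces $X$ such that for every $f\colon\Lambda\to X$ there is $F\in\mathcal{F}$ such that $f\restriction\rho(F)$ $\rho$-converges to some point of $X$. Katětov order: for partition regular $\rho_i\colon\mathcal{F}_i\to[\Lambda_i]^\omega$, $\mathcal{F}_i\subseteq[\Omega_i]^\omega$, write $\rho_2\leq_K\rho_1$ if there is $f\colon\Lambda_1\to\Lambda_2$ such that for every $F_1\in\mathcal{F}_1$ there is $F_2\in\mathcal{F}_2$ such that for every finite $K_1\subseteq\Omega_1$ there is a finite $K_2\subseteq\Omega_2$ with $\rho_2(F_2\setminus K_2)\subseteq f[\rho_1(F_1\setminus K_1)]$. $\mathrm{FIN}^2$ is the ideal on $\omega\times\omega$: $A\in\mathrm{FIN}^2$ iff there is $i_0$ such that $\{j:(i,j)\in A\}$ is finite for all $i\geq i_0$. $\rho\in P^-(\Lambda)$ means: for every decreasing sequence $\Lambda=A_0\supseteq A_1\supseteq\dots$ with $A_n\setminus A_{n+1}\in\mathcal{I}_\rho$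 for all $n$, there is $F\in\mathcal{F}$ such that for each $n$ there is a finite $K\subseteq\Omega$ with $\rho(F\setminus K)\subseteq A_n$. $\rho\in(S_1)$ means: for every $E\in\mathcal{F}$ there is $F\in\mathcal{F}$, $F\subseteq E$, such that for every $A\in\mathcal{I}_\rho$ there is $G\in\mathcal{F}$ with $\rho(G)\subseteq\rho(F)\setminus A$ and for every finite $K\subseteq\Omega$ there is a finite $L\subseteq\Omega$ with $\rho(G\setminus L)\subseteq\rho(F\setminus K)$. *)

(* Defs.v *)
From HB Require Import structures.
From mathcomp Require Import all_boot all_order all_algebra.
From mathcomp Require Import all_classical all_reals all_analysis.
Set Implicit Arguments. Unset Strict Implicit. Unset Printing Implicit Defensive.
Import Order.TTheory.
Local Open Scope classical_set_scope.

(* Elements [Some n] are the finite ordinals n < omega, [None] is omega itself. *)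
Definition omega1 : Type := option nat.
HB.instance Definition _ := Choice.on omega1.

Definition omega1_le (x y : omega1) : bool :=
  match x, y with
  | _, None => true
  | None, Some _ => false
  | Some m, Some n => (m <= n)%N
  end.
Definition omega1_lt (x y : omega1) : bool := (y != x) && omega1_le x y.
Definition omega1_meet (x y : omega1) : omega1 := if omega1_lt x y then x else y.
Definition omega1_join (x y : omega1) : omega1 := if omega1_lt x y then y else x.

Lemma omega1_le_anti : antisymmetric omega1_le.
Proof.
case=> [m|] [n|] //=.
by move=> /andP[h1 h2]; congr Some; apply/eqP; rewrite eqn_leq h1 h2.
Qed.
Lemma omega1_le_trans : transitive omega1_le.
Proof. by case=> [m|] [n|] [p|] //=; apply: leq_trans. Qed.
Lemma omega1_le_total : total omega1_le.
Proof. by case=> [m|] [n|] //=; apply: leq_total. Qed.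

Fact omega1_display : Order.disp_t. Proof. exact: Order.Disp tt tt. Qed.

HB.instance Definition _ := Order.isOrder.Build omega1_display omega1
  (fun _ _ => erefl) (fun _ _ => erefl) (fun _ _ => erefl)
  omega1_le_anti omega1_le_trans omega1_le_total.

Definition omega_plus_one : Type := order_topology omega1.

Section PRF.
Variables (Lambda Omega : Type).
Variables (F : set (set Omega)) (rho : set Omega -> set Lambda).

Definition partition_regular : Prop :=
  [/\ F !=set0,
      (forall E, F E -> infinite_set E),
      (forall E K, F E -> finite_set K -> F (E `\` K)) &
      (forall E, F E -> infinite_set (rho E))] /\
  [/\
      (forall E G, F E -> F G -> E `<=` G -> rho E `<=` rho G),
      (forall G A B, F G -> rho G = A `|` B ->
         exists E, F E /\ (rho E `<=` A \/ rho E `<=` B)) &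
      (forall E, F E -> exists G, [/\ F G, G `<=` E &
         forall a, rho G a -> exists K, finite_set K /\ ~ rho (G `\` K) a])].

Definition I_rho (A : set Lambda) : Prop := forall G, F G -> ~ (rho G `<=` A).

Definition rho_converges {X : topologicalType} (f : Lambda -> X) (G : set Omega)
  (x : X) : Prop :=
  forall U, nbhs x U ->
    exists K : set Omega, finite_set K /\ f @` rho (G `\` K) `<=` U.

Definition FinBW (X : topologicalType) : Prop :=
  forall f : Lambda -> X, exists G, F G /\ exists x : X, rho_converges f G x.

Definition P_minus : Prop :=
  forall A : nat -> set Lambda,
    A 0%N = setT -> (forall n, A n.+1 `<=` A n) ->
    (forall n, I_rho (A n `\` A n.+1)) ->
    exists G, F G /\ forall n, exists K : set Omega,
      finite_set K /\ rho (G `\` K) `<=` A n.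

Definition S1 : Prop :=
  forall E, F E -> exists G, [/\ F G, G `<=` E &
    forall A, I_rho A -> exists H, [/\ F H, rho H `<=` rho G `\` A &
      forall K : set Omega, finite_set K -> exists L : set Omega,
        finite_set L /\ rho (H `\` L) `<=` rho (G `\` K)]].

End PRF.

Definition katetov_le (L1 O1 L2 O2 : Type)
  (F2 : set (set O2)) (rho2 : set O2 -> set L2)
  (F1 : set (set O1)) (rho1 : set O1 -> set L1) : Prop :=
  exists f : L1 -> L2, forall E1, F1 E1 -> exists E2, F2 E2 /\
    forall K1 : set O1, finite_set K1 -> exists K2 : set O2,
      finite_set K2 /\ rho2 (E2 `\` K2) `<=` f @` rho1 (E1 `\` K1).

Definition FIN2 (A : set (nat * nat)) : Prop :=
  exists i0, forall i, (i0 <= i)%N -> finite_set [set j | A (i, j)].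

Definition ideal_plus (L : Type) (I : set (set L)) : set (set L) := ~` I.
Definition rho_ideal (L : Type) (A : set L) : set L := A.

(* Main.v *)
Set Warnings "-notation-overridden,-ambiguous-paths,-notation-incompatible-prefix".
Require Import Defs.
From mathcomp Require Import all_boot all_order all_algebra.
From mathcomp Require Import all_classical all_reals all_analysis.
Import Order.TTheory.
Local Open Scope classical_set_scope.
Set Implicit Arguments. Unset Strict Implicit.
Lemma NNPP (P : Prop) : ~ ~ P -> P.
Proof. by move=> h; case: (pselect P) => // /h. Qed.
Lemma opo_haus : hausdorff_space omega_plus_one.
Proof. exact: order_hausdorff. Qed.

Lemma opo_inf : ~ finite_set [set: omega_plus_one].
Proof.
move=> fin; apply: infinite_nat.
have -> : [set: nat] = (@Some nat) @^-1` [set: omega_plus_one] by [].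
by apply: finite_preimage => // a b _ _ [].
Qed.

Lemma le_opo (x y : omega_plus_one) : (x <= y)%O = omega1_le x y.
Proof. by []. Qed.
Lemma lt_opo (x y : omega_plus_one) : (x < y)%O = (y != x) && omega1_le x y.
Proof. by []. Qed.

Lemma opo_nbhs (U : set omega_plus_one) : nbhs (None : omega_plus_one) U ->
  exists n, forall m, (n < m)%N -> U (Some m).
Proof.
rewrite itv_nbhsE => -[i [oi Ni] iU].
case: i oi Ni iU => l r /= oi Ni iU.
move: Ni; rewrite in_itv /= => /andP[Hl Hr].
exists (match l with BSide _ (Some k) => k | _ => 0%N end) => m km.
apply: iU; rewrite /= in_itv /=; apply/andP; split.
  case: l Hl km oi => [b [k|]|b] //=.
  - case: b => /= _ km _.
     rewrite le_opo /=; exact: ltnW.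
    rewrite lt_opo /= (ltnW km) andbT.
    apply/eqP => -[] ek; move: km; rewrite ek ltnn //.
  - by case: b.
by case: r Hr oi => [b [k|]|b] //=; case: b => //=.
Qed.
Lemma nat_fin_bounded (S : set nat) : finite_set S -> exists m, forall x, S x -> (x < m)%N.
Proof.
move=> /finite_seqP[s ->]; elim: s => [|a s [m IH]]; first by exists 0%N.
exists (maxn m a.+1) => x /=; rewrite inE => /orP[/eqP->|xs].
  by rewrite leq_max leqnn orbT.
by rewrite leq_max IH.
Qed.

Lemma nat_unbounded_infinite (S : set nat) : (forall j, exists x, S x /\ (j <= x)%N) -> infinite_set S.
Proof.
move=> h /nat_fin_bounded [m hm]; have [x [Sx mx]] := h m.
by have := hm _ Sx; rewrite ltnNge mx.
Qed.

Section PR.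
Variables (Lambda Omega : Type) (F : set (set Omega)) (rho : set Omega -> set Lambda).
Hypothesis PR : partition_regular F rho.

Lemma pr_ne : F !=set0. Proof. by case: PR => -[]. Qed.
Lemma pr_FD E K : F E -> finite_set K -> F (E `\` K).
Proof. by case: PR => -[] _ _ h _ _; apply: h. Qed.
Lemma pr_inf E : F E -> infinite_set (rho E).
Proof. by case: PR => -[] _ _ _ h _; apply: h. Qed.
Lemma pr_M E G : F E -> F G -> E `<=` G -> rho E `<=` rho G.
Proof. by case: PR => _ [] h _ _; apply: h. Qed.
Lemma pr_R G A B : F G -> rho G = A `|` B ->
  exists E, F E /\ (rho E `<=` A \/ rho E `<=` B).
Proof. by case: PR => _ [] _ h _; apply: h. Qed.
Lemma pr_S E : F E -> exists G, [/\ F G, G `<=` E &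
  forall a, rho G a -> exists K, finite_set K /\ ~ rho (G `\` K) a].
Proof. by case: PR => _ [] _ _ h; apply: h. Qed.

Lemma rho_ne E : F E -> rho E !=set0.
Proof. by move=> /pr_inf /infinite_setN0. Qed.

Lemma rho_tail E K K' : F E -> finite_set K -> finite_set K' -> K `<=` K' ->
  rho (E `\` K') `<=` rho (E `\` K).
Proof.
move=> FE fK fK' KK'; apply: pr_M; try exact: pr_FD.
by move=> x [Ex nK']; split => // Kx; apply: nK'; apply: KK'.
Qed.

Lemma split_sub G A B : F G -> rho G `<=` A `|` B ->
  exists E, F E /\ (rho E `<=` A \/ rho E `<=` B).
Proof.
move=> FG sub.
have eqG : rho G = (rho G `&` A) `|` (rho G `&` B) by rewrite -setIUr setIidl.
have [E [FE h]] := @pr_R G (rho G `&` A) (rho G `&` B) FG eqG.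
exists E; split => //; case: h => h; [left|right];
  exact: subset_trans h (@subIsetr _ _ _).
Qed.

Lemma I_sub A B : A `<=` B -> I_rho F rho B -> I_rho F rho A.
Proof. by move=> AB IB G FG GA; apply: (IB G FG); apply: subset_trans GA AB. Qed.

Lemma I_U A B : I_rho F rho A -> I_rho F rho B -> I_rho F rho (A `|` B).
Proof.
move=> IA IB G FG GAB; have [E [FE [h|h]]] := split_sub FG GAB;
  [exact: IA FE h | exact: IB FE h].
Qed.

Lemma I_0 : I_rho F rho set0.
Proof. by move=> G FG sub; have [x Gx] := rho_ne FG; exact: sub _ Gx. Qed.

Lemma bounded_color (h : Lambda -> nat) n : (forall l, (h l < n)%N) ->
  exists E, F E /\ exists k, rho E `<=` h @^-1` [set k].
Proof.
move=> hb; have [G0 FG0] := pr_ne.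
suff: forall n G, F G -> rho G `<=` [set l | (h l < n)%N] ->
    exists E, F E /\ exists k, rho E `<=` h @^-1` [set k].
  by move=> /(_ n G0 FG0); apply => x _; exact: hb.
elim=> [|n' IH] G FG sub.
  by have [x Gx] := rho_ne FG; have := sub _ Gx.
have sub' : rho G `<=` [set l | (h l < n')%N] `|` (h @^-1` [set n']).
  move=> x Gx; move: (sub _ Gx); rewrite /= ltnS leq_eqVlt => /orP[/eqP->|]; by [right|left].
have [E [FE [hE|hE]]] := split_sub FG sub'.
- exact: IH FE hE.
- by exists E; split => //; exists n'.
Qed.

Lemma finite_FinBW (X : topologicalType) : finite_set [set: X] -> FinBW F rho X.
Proof.
move=> [n /pcard_eqP [g]] f.
have [E [FE [k Ek]]] := @bounded_color (fun l => g (f l)) n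
  (fun l => @funS _ _ _ _ g (f l) I).
exists E; split => //; have [l0 El0] := rho_ne FE.
exists (f l0) => U /nbhs_singleton Ux; exists set0; split; first exact: finite_set0.
move=> y [l]; rewrite setD0 => El <-.
suff -> : f l = f l0 by [].
apply: (@inj _ _ _ g); rewrite ?inE //.
by move: (Ek _ El) (Ek _ El0); rewrite /preimage /= => -> ->.
Qed.

End PR.
Lemma hausdorff_sep (X : topologicalType) : hausdorff_space X -> forall x y : X, x <> y ->
  exists V W, [/\ open V, open W, V x, W y & V `&` W = set0].
Proof.
rewrite open_hausdorff => h x y /eqP /h [[V W] /= [xV yW] [oV oW /eqP VW]].
by exists V, W; split => //; rewrite -inE.
Qed.

Lemma step_ex (X : topologicalType) : hausdorff_space X -> forall Y : set X, infinite_set Y ->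
  exists p : X * set X, [/\ Y p.1, open p.2, p.2 p.1 & infinite_set (Y `\` p.2)].
Proof.
move=> hX Y iY.
have [a Ya] := infinite_setN0 iY.
have iY' : infinite_set (Y `\` [set a]) := infinite_setD iY (finite_set1 a).
have [b [Yb nba]] := infinite_setN0 iY'.
have ab : a <> b by move=> e; apply: nba; rewrite e.
have [V [W [oV oW Va Wb VW]]] := hausdorff_sep hX ab.
have [fW|iW] := pselect (finite_set (Y `\` W)); last by exists (b, W).
exists (a, V); split => // fV; apply: iY.
apply: (@sub_finite_set _ _ ((Y `\` V) `|` (Y `\` W))); last by rewrite finite_setU.
move=> y Yy; have [Vy|nVy] := pselect (V y); last by left.
right; split => // Wy; have : (V `&` W) y by [].
by rewrite VW.
Qed.

Section DS.
Variables (X : topologicalType) (hX : hausdorff_space X) (iX : infinite_set [set: X]).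
Definition infT := {Y : set X | infinite_set Y}.
Definition stp (Y : infT) := cid (step_ex hX (proj2_sig Y)).
Definition nxt (Y : infT) : infT :=
  exist _ (proj1_sig Y `\` (proj1_sig (stp Y)).2)
    (match proj2_sig (stp Y) with And4 _ _ _ h => h end).
Fixpoint Ys n : infT := if n is n'.+1 then nxt (Ys n') else exist _ setT iX.
Definition xs n := (proj1_sig (stp (Ys n))).1.
Definition Us n := (proj1_sig (stp (Ys n))).2.

Lemma Ys_dec i j : (i <= j)%N -> proj1_sig (Ys j) `<=` proj1_sig (Ys i).
Proof.
elim: j => [|j IH]; first by rewrite leqn0 => /eqP ->.
rewrite leq_eqVlt => /orP[/eqP->//|]; rewrite ltnS => /IH h.
by apply: subset_trans h; move=> y [].
Qed.

Lemma xs_Ys j : proj1_sig (Ys j) (xs j).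
Proof. by rewrite /xs; case: (proj2_sig (stp (Ys j))). Qed.

Lemma Us_prop i : open (Us i) /\ Us i (xs i).
Proof. by rewrite /xs /Us; case: (proj2_sig (stp (Ys i))). Qed.

Lemma Us_sep i j : (i < j)%N -> ~ Us i (xs j).
Proof. by move=> /Ys_dec h; have [] := h _ (xs_Ys j). Qed.

Lemma xs_inj i j : xs i = xs j -> i = j.
Proof.
move=> e; have [ij|ji|//] := ltngtP i j.
  by have := Us_sep ij; rewrite -e; have [] := Us_prop i.
by have := Us_sep ji; rewrite e; have [] := Us_prop j.
Qed.
End DS.

Lemma T1_nbhs (X : topologicalType) : hausdorff_space X -> forall (x : X) (s : nat -> X) n,
  exists V, nbhs x V /\ forall j, (j < n)%N -> V (s j) -> s j = x.
Proof.
move=> hX x s; elim=> [|n [V [nV hV]]].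
  by exists setT; split => //; exact: filterT.
have [e|ne] := pselect (s n = x).
  exists V; split => // j; rewrite ltnS leq_eqVlt => /orP[/eqP->//|]; exact: hV.
have xsn : x <> s n by move=> e; apply: ne; rewrite e.
have [A [B [oA oB Ax Bsn AB]]] := hausdorff_sep hX xsn.
exists (V `&` A); split; first by apply: filterI => //; apply: open_nbhs_nbhs; split.
move=> j; rewrite ltnS leq_eqVlt => /orP[/eqP->|jn] [Vj Aj].
  by have : (A `&` B) (s n) by []; rewrite AB.
exact: hV.
Qed.
Section NotP.
Variables (Lambda Omega : Type) (F : set (set Omega)) (rho : set Omega -> set Lambda).
Hypothesis PR : partition_regular F rho.
Variable A : nat -> set Lambda.
Hypotheses (A0 : A 0%N = setT) (Adec : forall n, A n.+1 `<=` A n)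
  (AI : forall n, I_rho F rho (A n `\` A n.+1))
  (Anot : forall G, F G -> exists n, forall K, finite_set K -> ~ rho (G `\` K) `<=` A n).

Lemma A_le m n : (m <= n)%N -> A n `<=` A m.
Proof.
elim: n => [|n IH]; first by rewrite leqn0 => /eqP ->.
rewrite leq_eqVlt => /orP[/eqP->//|]; rewrite ltnS => /IH h.
by move=> x /Adec /h.
Qed.

Lemma I_compl n : I_rho F rho (~` A n).
Proof.
elim: n => [|n IH]; first by rewrite A0 setCT; exact: I_0 PR.
apply: (I_sub _ (I_U PR IH (@AI n))) => x nAx.
by have [An|nAn] := pselect (A n x); [right|left].
Qed.

Definition Z l := A l `\` A l.+1.

Lemma Z_uniq l l' x : Z l x -> Z l' x -> l = l'.
Proof.
move=> [Al nAl] [Al' nAl']; have [ll'|l'l|//] := ltngtP l l'.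
  by exfalso; apply: nAl; exact: A_le ll' _ Al'.
by exfalso; apply: nAl'; exact: A_le l'l _ Al.
Qed.

Definition lev x : nat :=
  match pselect (exists l, Z l x) with
  | left e => proj1_sig (cid e)
  | right _ => 0%N
  end.

Lemma lev_Z l x : Z l x -> lev x = l.
Proof.
rewrite /lev; case: pselect => [e|ne] Zl; last by exfalso; apply: ne; exists l.
by case: (cid e) => l' /= Zl'; exact: Z_uniq Zl' Zl.
Qed.

Lemma lev_cases x : Z (lev x) x \/ (forall n, A n x).
Proof.
rewrite /lev; case: pselect => [e|ne]; first by case: (cid e) => l /= Zl; left.
right; elim=> [|n IH]; first by rewrite A0.
have [//|nA] := pselect (A n.+1 x).
by exfalso; apply: ne; exists n; split.
Qed.

Lemma lev_A x : A (lev x) x.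
Proof. by case: (lev_cases x) => [[]|]. Qed.

Lemma exists_level n p x : A n x -> ~ A p x ->
  exists l, [/\ (n <= l)%N, (l < p)%N & Z l x].
Proof.
elim: p => [|p IH] Anx nApx; first by exfalso; apply: nApx; rewrite A0.
have [Ap|nAp] := pselect (A p x).
  exists p; split => //; rewrite leqNgt; apply/negP => pn.
  by apply: nApx; exact: A_le pn _ Anx.
by have [l [nl lp Zl]] := IH Anx nAp; exists l; split => //; exact: ltnW.
Qed.

Lemma notFinBW (X : topologicalType) : hausdorff_space X -> infinite_set [set: X] ->
  ~ FinBW F rho X.
Proof.
move=> hX iX.
pose x := xs hX iX.
move=> /(_ (fun l => x (lev l))) [G [FG [y conv]]].
have [n Hn] := Anot FG.
have [V [nV hV]] := T1_nbhs hX y x n.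
have [[i [i_n ei]]|nex] := pselect (exists i, (i < n)%N /\ x i = y).
- have [oU Ux] := Us_prop hX iX i.
  have nW : nbhs y (V `&` Us hX iX i).
    by apply: filterI => //; rewrite -ei; apply: open_nbhs_nbhs; split.
  have [K [fK sub]] := conv _ nW.
  have sub2 : rho (G `\` K) `<=` Z i `|` (fun l => forall n, A n l).
    move=> l Gl; have [Vl Ul] := sub _ (imageP _ Gl).
    have levi : lev l = i.
      have [ln|nl] := ltnP (lev l) n.
        by have := hV _ ln Vl; rewrite -ei => /xs_inj.
      by exfalso; exact: Us_sep (leq_trans i_n nl) Ul.
    by have [Zl|Al] := lev_cases l; [left; rewrite -levi | right].
  have [E [FE [hE|hE]]] := split_sub PR (pr_FD PR FG fK) sub2.
  + exact: AI FE hE.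
  + have [n' Hn'] := Anot FE; apply: (Hn' set0 (finite_set0 _)).
    by rewrite setD0 => l El; exact: hE _ El n'.
- have [K [fK sub]] := conv _ nV.
  apply: (Hn K fK) => l Gl.
  have Vl := sub _ (imageP _ Gl).
  have [ln|nl] := ltnP (lev l) n.
    by exfalso; apply: nex; exists (lev l); split => //; exact: hV.
  exact: A_le nl _ (lev_A l).
Qed.

Variables (eL : Lambda -> nat) (eO : Omega -> nat).
Hypotheses (eLi : injective eL) (eOi : injective eO).
Hypothesis S1h : S1 F rho.

Definition Pcol (E : set Omega) l := forall K, finite_set K -> forall j,
  exists x, [/\ rho (E `\` K) x, lev x = l & (j <= eL x)%N].

Lemma col_lemma E : F E -> forall n, exists l, (n <= l)%N /\ Pcol E l.
Proof.
move=> FE n.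
have [G [FG GE HG]] := S1h FE.
have [H [FH HGA Htail]] := HG _ (@I_compl n).
have [H' [FH' H'H SH']] := pr_S PR FH.
have [p Hp] := Anot FH'.
apply: NNPP => nex.
have hl : forall l, exists Lj : set Omega * nat, finite_set Lj.1 /\
    ((n <= l)%N -> forall x, rho (H' `\` Lj.1) x -> lev x = l -> (eL x < Lj.2)%N).
  move=> l; have [nl|ln] := pselect (n <= l)%N; last first.
    by exists (set0, 0%N); split => //; exact: finite_set0.
  have nPl : ~ Pcol E l by move=> Pl; apply: nex; exists l.
  have [K [fK [j hj]]] : exists K, finite_set K /\ exists j, forall x,
      rho (E `\` K) x -> lev x = l -> (eL x < j)%N.
    apply: NNPP => h1; apply: nPl => K fK j; apply: NNPP => h2; apply: h1.
    exists K; split => //; exists j => x Ex lx; rewrite ltnNge; apply/negP => jl.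
    by apply: h2; exists x; split.
  have [L [fL HL]] := Htail K fK.
  exists (L, j); split => // _ x Hx lx; apply: hj lx.
  have s1 : rho (H' `\` L) `<=` rho (H `\` L).
    apply: (pr_M PR); try exact: (pr_FD PR).
    by move=> o [H'o nLo]; split => //; exact: H'H.
  have s2 : rho (G `\` K) `<=` rho (E `\` K).
    apply: (pr_M PR); try exact: (pr_FD PR).
    by move=> o [Go nKo]; split => //; exact: GE.
  exact/s2/HL/s1.
have [Lj hLj] := choice hl.
pose J := \max_(i < p) (Lj i).2.
have hk : forall j, exists K : set Omega, finite_set K /\
    forall x, rho H' x -> eL x = j -> ~ rho (H' `\` K) x.
  move=> j; have [[x [Hx ex]]|nx] := pselect (exists x, rho H' x /\ eL x = j).
    have [K [fK nK]] := SH' _ Hx; exists K; split => // x' Hx' ex'.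
    by have -> : x' = x by apply: eLi; rewrite ex ex'.
  exists set0; split; first exact: finite_set0.
  by move=> x Hx ex; exfalso; apply: nx; exists x.
have [Kj hKj] := choice hk.
pose K := \bigcup_(i in `I_p) (Lj i).1 `|` \bigcup_(j in `I_J) Kj j.
have fK : finite_set K.
  rewrite finite_setU; split; apply: bigcup_finite; try exact: finite_II.
    by move=> i _; case: (hLj i).
  by move=> j _; case: (hKj j).
apply: (Hp K fK) => x Hx.
have H'x : rho H' x.
  by apply: (pr_M PR (pr_FD PR FH' fK) FH' _ Hx) => o [].
have Anx : A n x.
  have : rho H x by apply: (pr_M PR FH' FH H'H).
  by move=> /HGA [_ /=]; apply: NNPP.
apply: NNPP => nAp.
have [l [nl lp Zl]] := exists_level Anx nAp.
have levl := lev_Z Zl.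
have Hxl : rho (H' `\` (Lj l).1) x.
  apply: (pr_M PR (pr_FD PR FH' fK) _ _ Hx); first by apply: (pr_FD PR) => //; case: (hLj l).
  by move=> o [H'o nKo]; split => // Lo; apply: nKo; left; exists l.
have ej := (hLj l).2 nl x Hxl levl.
have eJ : (eL x < J)%N.
  apply: (leq_trans ej).
  exact: (@leq_bigmax _ (fun i : 'I_p => (Lj i).2) (Ordinal lp)).
apply: ((hKj (eL x)).2 x H'x erefl).
apply: (pr_M PR (pr_FD PR FH' fK) _ _ Hx); first by apply: (pr_FD PR) => //; case: (hKj (eL x)).
by move=> o [H'o nKo]; split => // Lo; apply: nKo; right; exists (eL x).
Qed.

Lemma S1_katetov : katetov_le (ideal_plus FIN2) (@rho_ideal (nat * nat)) F rho.
Proof.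
exists (fun x => (lev x, eL x)) => E FE.
have [c hc] := choice (col_lemma FE).
pose Om m := [set o | (eO o < m)%N].
have fOm m : finite_set (Om m).
  rewrite /Om; have -> : [set o | (eO o < m)%N] = eO @^-1` `I_m by [].
  by apply: finite_preimage; [move=> a b _ _; exact: eOi | exact: finite_II].
have hb : forall kj : nat * nat, exists x,
    [/\ rho (E `\` Om (kj.1 + kj.2)%N) x, lev x = c kj.1 & (kj.2 <= eL x)%N].
  by move=> [k j]; have [_ Pk] := hc k; exact: Pk _ (fOm _) j.
have [b hb'] := choice hb.
pose g (kj : nat * nat) := (c kj.1, eL (b kj)).
exists (g @` setT); split.
  move=> [i0 Hi0]; have := Hi0 (c i0) (hc i0).1.
  apply: nat_unbounded_infinite => j.
  exists (eL (b (i0, j))); split; first by exists (i0, j).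
  by case: (hb' (i0, j)).
move=> K1 fK1.
have [m hm] := nat_fin_bounded (finite_image eO fK1).
exists (g @` (`I_m `*` `I_m)); split.
  by apply: finite_image; apply: finite_setX; exact: finite_II.
move=> y [[kj _ <-] nK2].
have [Eb lb jb] := hb' kj.
exists (b kj); last by rewrite /g lb.
have mkj : (m <= kj.1 + kj.2)%N.
  rewrite leqNgt; apply/negP => lt; apply: nK2; exists kj => //.
  split => /=; [exact: leq_ltn_trans (leq_addr _ _) lt | exact: leq_ltn_trans (leq_addl _ _) lt].
apply: (pr_M PR (pr_FD PR FE (fOm _)) (pr_FD PR FE fK1) _ Eb).
move=> o [Eo nOm]; split => // K1o; apply: nOm.
by rewrite /Om /=; apply: leq_trans mkj; apply: hm; exists o.
Qed.

End NotP.
Lemma P_minus_FinBW L O (F : set (set O)) (rho : set O -> set L) :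
  partition_regular F rho -> P_minus F rho -> FinBW F rho omega_plus_one.
Proof.
move=> PR PM f.
pose A n := [set l | forall m, (m < n)%N -> f l <> Some m].
have [[n nI]|allI] := pselect (exists n, ~ I_rho F rho (A n `\` A n.+1)).
- have [G [FG GA]] : exists G, F G /\ rho G `<=` A n `\` A n.+1.
    by apply: NNPP => h; apply: nI => G FG sub; apply: h; exists G.
  exists G; split => //; exists (Some n) => U /nbhs_singleton Un.
  exists set0; split; first exact: finite_set0.
  move=> y [l]; rewrite setD0 => Gl <-.
  have [Al nAl] := GA _ Gl.
  suff -> : f l = Some n by [].
  apply: NNPP => ne; apply: nAl => m; rewrite ltnS leq_eqVlt => /orP[/eqP->//|].
  exact: Al.
- have AI : forall n, I_rho F rho (A n `\` A n.+1).
    by move=> n; apply: NNPP => h; apply: allI; exists n.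
  have A0 : A 0%N = setT by apply/seteqP; split => // l _ m.
  have Adec : forall n, A n.+1 `<=` A n.
    by move=> n l Al m mn; apply: Al; exact: ltnW.
  have [G [FG HG]] := PM A A0 Adec AI.
  exists G; split => //; exists None => U nU.
  have [n Hn] := opo_nbhs nU.
  have [K [fK sub]] := HG n.+1.
  exists K; split => // y [l Gl <-].
  have Al := sub _ Gl.
  case E: (f l) => [m|]; last exact: nbhs_singleton nU.
  apply: Hn; rewrite ltnNge; apply/negP => mn.
  by apply: (Al m) => //; rewrite ltnS.
Qed.

Lemma notP_data L O (F : set (set O)) (rho : set O -> set L) :
  ~ P_minus F rho -> exists A : nat -> set L, [/\ A 0%N = setT,
    (forall n, A n.+1 `<=` A n), (forall n, I_rho F rho (A n `\` A n.+1)) &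
    (forall G, F G -> exists n, forall K, finite_set K -> ~ rho (G `\` K) `<=` A n)].
Proof.
move=> nP; apply: NNPP => h; apply: nP => A A0 Adec AI.
apply: NNPP => h2; apply: h; exists A; split => // G FG.
apply: NNPP => h3; apply: h2; exists G; split => // n.
by apply: NNPP => h4; apply: h3; exists n => K fK sub; apply: h4; exists K.
Qed.

Lemma finite_section (K : set (nat * nat)) i : finite_set K -> finite_set [set j | K (i, j)].
Proof.
move=> fK; have -> : [set j | K (i, j)] = pair i @^-1` K by [].
by apply: finite_preimage => // a b _ _ [].
Qed.

Lemma katetov_notP L O (F : set (set O)) (rho : set O -> set L) :
  katetov_le (ideal_plus FIN2) (@rho_ideal (nat * nat)) F rho -> ~ P_minus F rho.
Proof.
move=> [f Hf] PM.
pose A n := [set l | (n <= (f l).1)%N].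
have A0 : A 0%N = setT by apply/seteqP; split => // l _; rewrite /A /=.
have Adec : forall n, A n.+1 `<=` A n by move=> n l; rewrite /A /= => /ltnW.
have AI : forall n, I_rho F rho (A n `\` A n.+1).
  move=> n G FG sub.
  have [B [PB HB]] := Hf G FG.
  have [K2 [fK2 sK]] := HB set0 (finite_set0 _).
  apply: PB; exists n.+1 => i ni.
  apply: (@sub_finite_set _ _ [set j | K2 (i, j)]); last exact: finite_section.
  move=> j Bij; apply: NNPP => nK.
  have [l Gl fl] := sK (i, j) (conj Bij nK).
  move: Gl; rewrite setD0 => /sub [].
  by rewrite /A /= fl /= => _; apply.
have [G [FG HG]] := PM A A0 Adec AI.
have [B [PB HB]] := Hf G FG.
apply: PB; exists 0%N => i _.
have [K [fK sK]] := HG i.+1.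
have [K2 [fK2 sK2]] := HB K fK.
apply: (@sub_finite_set _ _ [set j | K2 (i, j)]); last exact: finite_section.
move=> j Bij; apply: NNPP => nK.
have [l Gl fl] := sK2 (i, j) (conj Bij nK).
by move: (sK _ Gl); rewrite /A /= fl /= ltnn.
Qed.
Lemma inj_of_card (T : Type) : ([set: T] #= [set: nat])%card ->
  exists e : T -> nat, injective e.
Proof.
case/pcard_eqP => e; exists e => a b eab.
by apply: (@inj _ _ _ e) => //; rewrite inE.
Qed.

Unset Implicit Arguments.

Theorem theorem3p1 (Lambda Omega : Type)
  (hL : ([set: Lambda] #= [set: nat])%card) (hO : ([set: Omega] #= [set: nat])%card)
  (F : set (set Omega)) (rho : set Omega -> set Lambda) :
  partition_regular F rho ->
  let c1 := forall X : topologicalType, hausdorff_space X ->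
              (FinBW F rho X <-> finite_set [set: X]) in
  let c2 := ~ FinBW F rho omega_plus_one in
  let c3 := ~ P_minus F rho in
  let c4 := katetov_le (ideal_plus FIN2) (@rho_ideal (nat * nat)) F rho in
  [/\ c1 <-> c2, c2 <-> c3, (c4 -> c1) & (S1 F rho -> (c1 <-> c4))].
Proof.
move=> PR c1 c2 c3 c4.
have [eL eLi] := inj_of_card hL.
have [eO eOi] := inj_of_card hO.
have c1c2 : c1 -> c2.
  by move=> h1 h2; apply: opo_inf; exact: ((h1 _ opo_haus).1 h2).
have c2c3 : c2 -> c3 by move=> h2 PM; apply: h2; exact: P_minus_FinBW PR PM.
have c3c1 : c3 -> c1.
  move=> h3 X hX; split; first last.
    by move=> fX; exact: (finite_FinBW PR fX).
  move=> FB; apply: NNPP => iX.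
  have [A [A0 Adec AI Anot]] := notP_data h3.
  by have := notFinBW PR A0 Adec AI Anot hX; apply.
split.
- by split => [|h]; [exact: c1c2 | exact: c3c1 (c2c3 h)].
- by split => [|h]; [exact: c2c3 | exact: c1c2 (c3c1 h)].
- by move=> h4; apply: c3c1; exact: katetov_notP h4.
- move=> S1h; split => [h1|h4]; last by apply: c3c1; exact: katetov_notP h4.
  have h3 := c2c3 (c1c2 h1).
  have [A [A0 Adec AI Anot]] := notP_data h3.
  by have := S1_katetov PR A0 Adec AI Anot eLi eOi S1h.
Qed.
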